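(* There exist a decreasing gap asymptotically dense set $\Lambda\subset[0,+\infty)$ and a function $f\in C_0^+(\mathbb{R})$ such that $[0,1]\subset D(f,\Lambda)$ and $[4,5]\subset C(f,\Lambda)$.
   Context: For a discrete set $\Lambda\subset[0,\infty)$ and measurable $f:\mathbb{R}\to[0,+\infty)$, put $s(x)=\sum_{\lambda\in\Lambda}f(x+\lambda)$, $C(f,\Lambda)=\{x: s(x)<\infty\}$ and $D(f,\Lambda)=\{x: s(x)=\infty\}$. An unbounded infinite discrete set $\Lambda=\{\lambda_1<\lambda_2<\cdots\}$ is a decreasing gap asymptotically dense set if the gaps $d_n=\lambda_n-\lambda_{n-1}$ tend to $0$ monotone decreasingly. $C_0^+(\mathbb{R})$ denotes the set of continuous functions $\mathbb{R}\to[0,+\infty)$ tending to $0$ at $+\infty$. *)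

(* Defs.v *)
From Stdlib Require Import Reals.
Open Scope R_scope.

(* A discrete set Lambda = {lam 0 < lam 1 < ...} subset [0,oo), given by its
   increasing enumeration. Decreasing gap asymptotically dense: unbounded,
   gaps d_n = lam (n+1) - lam n are monotonically nonincreasing and tend to 0. *)
Definition dgad_set (lam : nat -> R) : Prop :=
  0 <= lam 0%nat /\
  (forall n, lam n < lam (S n)) /\
  (forall M, exists n, M < lam n) /\
  (forall n, lam (S (S n)) - lam (S n) <= lam (S n) - lam n) /\
  Un_cv (fun n => lam (S n) - lam n) 0.

Definition C0plus (f : R -> R) : Prop :=
  continuity f /\ (forall x, 0 <= f x) /\
  (forall eps, 0 < eps -> exists M, forall x, M < x -> f x < eps).

Definition conv_set (f : R -> R) (lam : nat -> R) (x : R) : Prop :=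
  exists l, infinite_sum (fun n => f (x + lam n)) l.

Definition div_set (f : R -> R) (lam : nat -> R) (x : R) : Prop :=
  ~ conv_set f lam x.

(* Main.v *)
Require Import Defs.
From Stdlib Require Import Reals Lra Lia Psatz Classical.
Open Scope R_scope.

Fixpoint lamq (n : nat) : R :=
  match n with
  | O => 1
  | S k => lamq k + exp (- (lamq k * lamq k))
  end.

Definition fq (t : R) : R := exp (- ((t - 1) * (t - 1))).

Lemma exp_le (a b : R) : a <= b -> exp a <= exp b.
Proof. intros [H|H]. left; now apply exp_increasing. subst; lra. Qed.

Lemma lamq_S n : lamq (S n) = lamq n + exp (- (lamq n * lamq n)).
Proof. reflexivity. Qed.

Lemma lamq_incr n : lamq n < lamq (S n).
Proof. rewrite lamq_S. pose proof (exp_pos (- (lamq n * lamq n))). lra. Qed.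

Lemma lamq_ge1 n : 1 <= lamq n.
Proof. induction n. simpl; lra. pose proof (lamq_incr n); lra. Qed.

Lemma lamq_mono m n : (m <= n)%nat -> lamq m <= lamq n.
Proof.
  induction 1. lra. pose proof (lamq_incr m0); lra.
Qed.

Lemma g_le1 t : exp (- (t * t)) <= 1.
Proof. rewrite <- exp_0. apply exp_le. nra. Qed.

Lemma exp_small eps t : 0 < eps -> 1 <= t -> - ln eps < t -> exp (- (t * t)) < eps.
Proof.
  intros He H1 H2.
  apply Rle_lt_trans with (exp (- t)). apply exp_le; nra.
  rewrite <- (exp_ln eps He). apply exp_increasing. lra.
Qed.

Lemma lamq_unbounded M : exists n, M < lamq n.
Proof.
  apply NNPP; intro H.
  assert (Hb : forall n, lamq n <= M).
  { intro n. apply Rnot_lt_le. intro Hn. apply H. now exists n. }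
  set (c := exp (- (M * M))).
  assert (Hc : 0 < c) by apply exp_pos.
  assert (Hg : forall n, c <= lamq (S n) - lamq n).
  { intro n. rewrite lamq_S. unfold c. apply Rplus_le_reg_l with (lamq n).
    replace (lamq n + (lamq n + exp (- (lamq n * lamq n)) - lamq n))
      with (lamq n + exp (- (lamq n * lamq n))) by ring.
    apply Rplus_le_compat_l. apply exp_le.
    pose proof (lamq_ge1 n); pose proof (Hb n). nra. }
  assert (Hl : forall n, 1 + INR n * c <= lamq n).
  { induction n. simpl; lra. rewrite S_INR. pose proof (Hg n). lra. }
  destruct (INR_archimed c M Hc) as [n Hn].
  pose proof (Hl n). pose proof (Hb n).
  lra.
Qed.

Lemma dgad_lamq : dgad_set lamq.
Proof.
  split; [simpl; lra|]. split; [exact lamq_incr|]. split; [exact lamq_unbounded|].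
  split.
  - intro n.
    assert (E1 : lamq (S (S n)) - lamq (S n) = exp (- (lamq (S n) * lamq (S n)))) by (rewrite (lamq_S (S n)); ring).
    assert (E2 : lamq (S n) - lamq n = exp (- (lamq n * lamq n))) by (rewrite (lamq_S n); ring).
    rewrite E1, E2.
    apply exp_le. pose proof (lamq_ge1 n). pose proof (lamq_incr n). nra.
  - intros eps He.
    destruct (lamq_unbounded (Rmax 1 (- ln eps))) as [N HN].
    exists N. intros n Hn. unfold Rdist.
    rewrite lamq_S.
    replace (lamq n + exp (- (lamq n * lamq n)) - lamq n - 0)
      with (exp (- (lamq n * lamq n))) by ring.
    rewrite Rabs_right by (left; apply exp_pos).
    pose proof (lamq_mono N n Hn).
    pose proof (Rmax_l 1 (- ln eps)). pose proof (Rmax_r 1 (- ln eps)).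
    apply exp_small; lra.
Qed.

Lemma C0_fq : C0plus fq.
Proof.
  split; [|split].
  - unfold fq. apply derivable_continuous. reg.
  - intro x. left; apply exp_pos.
  - intros eps He. exists (Rmax 2 (2 - ln eps)). intros x Hx.
    pose proof (Rmax_l 2 (2 - ln eps)). pose proof (Rmax_r 2 (2 - ln eps)).
    unfold fq. apply exp_small; lra.
Qed.

Lemma div_part x : 0 <= x <= 1 -> div_set fq lamq x.
Proof.
  intros Hx [l Hl].
  assert (Hp : forall N, lamq (S N) - lamq 0 <= sum_f_R0 (fun n => fq (x + lamq n)) N).
  { induction N.
    - simpl. unfold fq. replace (1 + exp (- (1 * 1)) - 1) with (exp (- (1*1))) by ring.
      apply exp_le. nra.
    - simpl sum_f_R0. rewrite (lamq_S (S N)).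
      assert (exp (- (lamq (S N) * lamq (S N))) <= fq (x + lamq (S N))).
      { unfold fq. apply exp_le. pose proof (lamq_ge1 (S N)). nra. }
      simpl lamq in *. cbv beta in *. lra. }
  destruct (Hl 1 ltac:(lra)) as [N0 HN0].
  destruct (lamq_unbounded (l + 3)) as [n Hn].
  specialize (HN0 (max n N0) ltac:(lia)).
  unfold Rdist in HN0. apply Rabs_def2 in HN0.
  pose proof (Hp (max n N0)).
  pose proof (lamq_mono n (S (max n N0)) ltac:(lia)).
  simpl lamq in *. lra.
Qed.

Lemma conv_part y : 4 <= y <= 5 -> conv_set fq lamq y.
Proof.
  intros Hy.
  set (F := fun n => fq (y + lamq n)).
  assert (Hterm : forall n, F n <= / lamq n - / lamq (S n)).
  { intro n. unfold F, fq. set (a := lamq n). set (g := exp (- (a * a))).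
    assert (Ha : 1 <= a) by apply lamq_ge1.
    assert (Hg0 : 0 < g) by apply exp_pos.
    assert (Hg1 : g <= 1) by apply g_le1.
    rewrite lamq_S. fold a. fold g.
    assert (E1 : exp (- ((y + a - 1) * (y + a - 1))) <= g * exp (- (6 * a + 9))).
    { unfold g. rewrite <- exp_plus. apply exp_le. nra. }
    set (u := 3 * a + 9 / 2).
    assert (E2 : (1 + u) * (1 + u) <= exp (6 * a + 9)).
    { replace (6 * a + 9) with (u + u) by (unfold u; lra). rewrite exp_plus.
      pose proof (exp_ineq1_le u). unfold u in *. nra. }
    assert (E3 : exp (- (6 * a + 9)) * (a * (a + g)) <= 1).
    { rewrite exp_Ropp. pose proof (exp_pos (6 * a + 9)).
      apply Rmult_le_reg_l with (exp (6 * a + 9)); auto.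
      rewrite <- Rmult_assoc, Rinv_r by lra. unfold u in E2. nra. }
    replace (/ a - / (a + g)) with (g / (a * (a + g))) by (field; lra).
    apply Rle_trans with (g * exp (- (6 * a + 9))); auto.
    apply Rmult_le_reg_r with (a * (a + g)). nra.
    replace (g / (a * (a + g)) * (a * (a + g))) with g by (field; nra). nra. }
  assert (Hpos : forall n, 0 <= F n) by (intro n; left; apply exp_pos).
  assert (Hb : forall N, sum_f_R0 F N <= / lamq 0 - / lamq (S N)).
  { induction N. simpl sum_f_R0. apply Hterm.
    simpl sum_f_R0. pose proof (Hterm (S N)). lra. }
  destruct (growing_cv (sum_f_R0 F)) as [l Hl].
  - intro n. simpl. pose proof (Hpos (S n)). lra.
  - exists 1. intros z [n ->]. pose proof (Hb n).
    pose proof (lamq_ge1 (S n)). assert (0 < / lamq (S n)) by (apply Rinv_0_lt_compat; lra).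
    change (lamq 0) with 1 in H. rewrite Rinv_1 in H. lra.
  - exists l. exact Hl.
Qed.

Theorem theorem3p3 :
  exists (lam : nat -> R) (f : R -> R),
    dgad_set lam /\ C0plus f /\
    (forall x, 0 <= x <= 1 -> div_set f lam x) /\
    (forall x, 4 <= x <= 5 -> conv_set f lam x).
Proof.
  exists lamq, fq. split; [exact dgad_lamq|]. split; [exact C0_fq|].
  split; [exact div_part | exact conv_part].
Qed.
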